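(* Every rule in the SEJR subfamily, for every choice of the completion subprocedure Alg3 and every tie-breaking, outputs a committee that provides EJR for $(\mathcal{A},k)$.
   Context: Setting: voters $N=\{1,\dots,n\}$, candidates $C=\{c_1,\dots,c_m\}$, approval ballots $A_i\subseteq C$, $\mathcal{A}=(A_1,\dots,A_n)$, $k\le m$ a positive integer. EJR: for $\ell\in\{1,\dots,k\}$, $N^*\subseteq N$ is $\ell$-cohesive if $|N^*|\ge\ell n/k$ and $|\bigcap_{i\in N^*}A_i|\ge\ell$. A committee $W$, $|W|=k$, provides EJR if for every $\ell$ and every $\ell$-cohesive $N^*$ some $i\in N^*$ has $|A_i\cap W|\ge\ell$. Dissatisfaction level: for $W\subseteq C$ with $|W|\le k$ and $c\in C\setminus W$, $\ell(c,W)$ is the largest nonnegative integer $\ell$ with $\ell=\lfloor \frac{k}{n}|\{i\in N: c\in A_i,\ |A_i\cap W|<\ell\}|\rfloor$. SEJR subfamily (parametrized by a subprocedure Alg3): start with $W=\emptyset$. While $|W|<k$ and $\max_{c\in C\setminus W}\ell(c,W)>0$, add to $W$ a candidate $c\in C\setminus W$ maximizing $\ell(c,W)$ (ties broken arbitrarily). Afterwards, if $|W|<k$, Alg3 adds arbitrary candidates from $C\setminus W$ until $|W|=k$. Output $W$. *)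

(* Defs.v *)
From mathcomp Require Import all_boot.
Set Implicit Arguments. Unset Strict Implicit. Unset Printing Implicit Defensive.

Section SEJR.
Variables (n : nat) (C : finType) (A : 'I_n -> {set C}) (k : nat).

Definition cohesive (l : nat) (Ns : {set 'I_n}) : Prop :=
  l * n <= k * #|Ns| /\ l <= #|\bigcap_(i in Ns) A i|.

Definition EJR (W : {set C}) : Prop :=
  #|W| = k /\
  forall l : nat, 1 <= l <= k ->
  forall Ns : {set 'I_n}, cohesive l Ns ->
  exists2 i, i \in Ns & l <= #|A i :&: W|.

Definition is_level (c : C) (W : {set C}) (l : nat) : bool :=
  l == (k * #|[set i | (c \in A i) && (#|A i :&: W| < l)]|) %/ n.

(* Every solution l of the
   fixpoint equation satisfies l <= k (when n > 0), and l = 0 is a solution,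
   so taking the max over l <= k is the largest solution. *)
Definition dlevel (c : C) (W : {set C}) : nat :=
  \max_(l < k.+1 | is_level c W l) l.

(* W is a possible output of some SEJR rule (any tie-breaking, any Alg3):
   s lists the candidates chosen greedily in order; afterwards Alg3 adds
   arbitrary candidates to reach size k. *)
Definition sejr_output (W : {set C}) : Prop :=
  exists s : seq C,
    uniq s /\ size s <= k /\
    (forall (s1 : seq C) (c : C) (s2 : seq C), s = s1 ++ c :: s2 ->
        c \notin [set x in s1] /\ 0 < dlevel c [set x in s1] /\
        (forall d, d \notin [set x in s1] ->
           dlevel d [set x in s1] <= dlevel c [set x in s1])) /\
    (size s = k \/
     forall d, d \notin [set x in s] -> dlevel d [set x in s] = 0) /\
    [set x in s] \subset W /\ #|W| = k.

End SEJR.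

(* Main.v *)
Require Import Defs.
From mathcomp Require Import all_boot all_order all_algebra.
From mathcomp Require Import lra.

Section Aux.
Variables (n : nat) (C : finType) (A : 'I_n -> {set C}) (k : nat).
Hypothesis n_gt0 : 0 < n.

Definition Sset (c : C) (W : {set C}) (l : nat) :=
  [set i | (c \in A i) && (#|A i :&: W| < l)].
Definition gf c W l := (k * #|Sset c W l|) %/ n.

Lemma gf_le_k c (W : {set C}) l : gf c W l <= k.
Proof.
rewrite /gf; have H : k * #|Sset c W l| <= k * n.
  by rewrite leq_mul2l; apply/orP; right; rewrite -[X in _ <= X]card_ord max_card.
by apply: leq_trans (leq_div2r n H) _; rewrite mulnK.
Qed.

Lemma gf_mono c (W : {set C}) l l' : l <= l' -> gf c W l <= gf c W l'.
Proof.
move=> ll; rewrite /gf; apply: leq_div2r; rewrite leq_mul2l; apply/orP; right.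
apply: subset_leq_card; apply/subsetP => i; rewrite !inE => /andP[-> H] /=.
exact: leq_trans H ll.
Qed.

Lemma gf_anti c (W W' : {set C}) l : W \subset W' -> gf c W' l <= gf c W l.
Proof.
move=> sW; rewrite /gf; apply: leq_div2r; rewrite leq_mul2l; apply/orP; right.
apply: subset_leq_card; apply/subsetP => i; rewrite !inE => /andP[-> H] /=.
apply: leq_ltn_trans H; apply: subset_leq_card; exact: setIS.
Qed.

Lemma dlevel_ge c (W : {set C}) x : x <= k -> x <= gf c W x -> x <= dlevel A k c W.
Proof.
move: {2}(k - x) (leqnn (k - x)) => d; elim: d x => [|d IH] x Hd xk xg.
  have xe : x = k by apply/eqP; rewrite eqn_leq xk -subn_eq0 -leqn0.
  have ge : gf c W x = x by apply/eqP; rewrite eqn_leq xg andbT xe gf_le_k.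
  have Hx : x < k.+1 by rewrite ltnS.
  rewrite /dlevel; apply: (leq_bigmax_cond (Ordinal Hx)) => /=.
  by rewrite /is_level -/(Sset c W x) -/(gf c W x) ge.
case: (ltngtP x (gf c W x)) => [lt|gt|eq]; last first.
- have Hx : x < k.+1 by rewrite ltnS.
  rewrite /dlevel; apply: (leq_bigmax_cond (Ordinal Hx)) => /=.
  by rewrite /is_level -/(Sset c W x) -/(gf c W x) -eq.
- by move: xg; rewrite leqNgt gt.
apply: leq_trans (ltnW lt) _; apply: IH.
- move: lt (gf_le_k c W x) Hd; set y := gf c W x => lt yk Hd.
  rewrite -ltnS; apply: leq_trans Hd; rewrite ltn_sub2l //; exact: leq_trans lt yk.
- exact: gf_le_k.
- exact: gf_mono (ltnW lt).
Qed.

Lemma dlevel_le_k c (W : {set C}) : dlevel A k c W <= k.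
Proof. by apply/bigmax_leqP => i _; rewrite -ltnS. Qed.

Lemma dlevel_fix c (W : {set C}) : dlevel A k c W = gf c W (dlevel A k c W).
Proof.
rewrite /dlevel; have [|i0 Hi0 ->] := eq_bigmax_cond (fun l : 'I_k.+1 => nat_of_ord l)
   (A := fun l : 'I_k.+1 => is_level A k c W l).
  apply/card_gt0P; exists ord0; rewrite /= /is_level /=.
  rewrite unfold_in /= /is_level.
  have -> : [set i | (c \in A i) && (#|A i :&: W| < 0)] = set0.
    by apply/setP => i; rewrite !inE andbF.
  by rewrite cards0 muln0 div0n.
by move: Hi0; rewrite /is_level => /eqP.
Qed.

Lemma dlevel_anti c (W W' : {set C}) : W \subset W' -> dlevel A k c W' <= dlevel A k c W.
Proof.
move=> sW; apply: dlevel_ge; first exact: dlevel_le_k.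
by rewrite {1}dlevel_fix; apply: gf_anti.
Qed.


Section Seq.
Variables (s : seq C) (x0 : C).
Hypothesis Hu : uniq s.
Hypothesis HG : forall (s1 : seq C) (c : C) (s2 : seq C), s = s1 ++ c :: s2 ->
        c \notin [set x in s1] /\ 0 < dlevel A k c [set x in s1] /\
        (forall d, d \notin [set x in s1] ->
           dlevel A k d [set x in s1] <= dlevel A k c [set x in s1]).

Definition cT t := nth x0 s t.
Definition WT t := [set x in take t s].
Definition lev t := dlevel A k (cT t) (WT t).
Definition ST t := Sset (cT t) (WT t) (lev t).

Lemma WT_succ t : t < size s -> WT t.+1 = cT t |: WT t.
Proof.
move=> ts; rewrite /WT (take_nth x0 ts); apply/setP => x.
by rewrite !inE mem_rcons inE.
Qed.

Lemma greedy t : t < size s -> [/\ cT t \notin WT t, 0 < lev t &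
  forall d, d \notin WT t -> dlevel A k d (WT t) <= lev t].
Proof.
move=> ts; have E : s = take t s ++ cT t :: drop t.+1 s.
  by rewrite /cT -drop_nth // cat_take_drop.
by have [H1 [H2 H3]] := HG _ _ _ E; split.
Qed.

Lemma WT_sub t : WT t \subset [set x in s].
Proof. by apply/subsetP => x; rewrite !inE => /mem_take. Qed.

Lemma WT_mono t t' : t <= t' -> WT t \subset WT t'.
Proof.
move=> tt; apply/subsetP => x; rewrite !inE.
by rewrite -(subnKC tt) takeD mem_cat => ->.
Qed.

Lemma lev_succ t : t.+1 < size s -> lev t.+1 <= lev t.
Proof.
move=> ts; have ts' : t < size s by apply: ltnW.
have [n1 _ _] := greedy _ ts; have [_ _ m2] := greedy _ ts'.
rewrite /lev; apply: leq_trans (dlevel_anti _ _ _ (WT_mono _ _ (leqnSn t))) _.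
apply: m2; apply: contra n1; apply/subsetP; exact: WT_mono.
Qed.

Lemma lev_mono t t' : t <= t' -> t' < size s -> lev t' <= lev t.
Proof.
elim: t' => [|t' IH]; first by rewrite leqn0 => /eqP ->.
rewrite leq_eqVlt => /orP[/eqP -> //|]; rewrite ltnS => tt ts.
apply: leq_trans (lev_succ _ ts) (IH tt (ltnW ts)).
Qed.


Import Order.TTheory GRing.Theory Num.Theory.
Local Open Scope ring_scope.

Definition term i t : rat := if i \in ST t then ((lev t)%:R)^-1 else 0.
Definition w i T : rat := \sum_(t < T) term i t.

Lemma cnt_succ i t : (t < size s)%N ->
  #|A i :&: WT t.+1| = ((i \in ST t) + #|A i :&: WT t|)%N \/
  (i \notin ST t /\ (#|A i :&: WT t| <= #|A i :&: WT t.+1|)%N).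
Proof.
move=> ts; case: (boolP (i \in ST t)) => iS; last first.
  right; split => //; apply: subset_leq_card; apply: setIS; exact: WT_mono.
left; have [nW _ _] := greedy _ ts.
have Hc : cT t \in A i by move: iS; rewrite inE => /andP[].
have -> : A i :&: WT t.+1 = cT t |: (A i :&: WT t).
  rewrite WT_succ //; apply/setP => x; rewrite !inE.
  by case: eqP => // ->; rewrite Hc.
by rewrite cardsU1 inE (negbTE nW) andbF.
Qed.

Lemma w_le_cnt (mu : nat) i T : (0 < mu)%N -> (T <= size s)%N ->
  (forall t, (t < T)%N -> (mu <= lev t)%N) ->
  mu%:R * w i T <= (#|A i :&: WT T|)%:R.
Proof.
move=> mu0; elim: T => [|T IH] Ts Hmu.
  by rewrite /w big_ord0 mulr0 ler0n.
have ts : (T < size s)%N by [].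
rewrite /w big_ord_recr /= mulrDr -/(w i T).
have IH' := IH (ltnW Ts) (fun t tT => Hmu t (ltnW tT)).
have [_ lev0 _] := greedy _ ts.
rewrite /term; case: (cnt_succ i T ts) => [->|[nS le]].
  case: ifP => iS.
    rewrite natrD addrC; apply: lerD => //.
    rewrite ler_pdivrMr ?ltr0n // mul1r ler_nat; exact: Hmu.
  by rewrite mulr0 addr0 add0n.
rewrite (negbTE nS) mulr0 addr0; apply: le_trans IH' _; by rewrite ler_nat.
Qed.

Lemma w_le1 i T : (T <= size s)%N -> w i T <= 1.
Proof.
elim: T => [|T IH] Ts; first by rewrite /w big_ord0 ler01.
have ts : (T < size s)%N by [].
rewrite /w big_ord_recr /= -/(w i T) /term.
case: ifP => iS; last by rewrite addr0; apply: IH; apply: ltnW.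
have [_ lev0 _] := greedy _ ts.
have H := w_le_cnt (lev T) i T lev0 (ltnW Ts) (fun t tT => lev_mono _ _ (ltnW tT) ts).
have Hc : (#|A i :&: WT T| < lev T)%N by move: iS; rewrite inE => /andP[].
have L0 : 0 < (lev T)%:R :> rat by rewrite ltr0n.
rewrite -(ler_pM2l L0) mulrDr mulfV ?gt_eqF // mulr1.
apply: le_trans (lerD H (lexx 1)) _; by rewrite -[1]/(1%:R) -natrD ler_nat addn1.
Qed.

Lemma sum_term t : (0 < k)%N -> (t < size s)%N ->
  n%:R / k%:R <= \sum_(i < n) term i t.
Proof.
move=> k0 ts; have [_ lev0 _] := greedy _ ts.
rewrite /term -big_mkcond /= sumr_const.
have Hf := dlevel_fix (cT t) (WT t).
have H : (lev t * n <= k * #|ST t|)%N.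
  by rewrite /lev {1}Hf /gf -/(ST t); apply: leq_divM.
rewrite -[_ *+ #|ST t|]mulr_natl ler_pdivrMr ?ltr0n // mulrAC.
rewrite ler_pdivlMr ?ltr0n // -!natrM ler_nat mulnC [X in (_ <= X)%N]mulnC //.
Qed.

End Seq.

Lemma cohesive_level l Ns (W W' : {set C}) : (1 <= l <= k)%N -> cohesive A k l Ns ->
  (forall i, i \in Ns -> #|A i :&: W| < l)%N -> W' \subset W ->
  exists c, c \notin W' /\ (l <= dlevel A k c W')%N.
Proof.
move=> /andP[l1 lk] [Hc1 Hc2] Hlt sW.
have [i0 Hi0] : exists i0, i0 \in Ns.
  apply/card_gt0P; rewrite lt0n; apply/eqP => E; move: Hc1; rewrite E muln0 leqn0 muln_eq0.
  by case/orP => /eqP E0; [rewrite E0 in l1 | move: n_gt0; rewrite E0].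
set I := \bigcap_(i in Ns) A i in Hc2.
have sI : forall i, i \in Ns -> I \subset A i by move=> i Hi; apply: bigcap_inf.
have cW : forall i, (#|A i :&: W'| <= #|A i :&: W|)%N.
  by move=> i; apply: subset_leq_card; apply: setIS.
have H1 : (#|I :&: W'| < l)%N.
  apply: leq_ltn_trans (Hlt _ Hi0); apply: leq_trans (cW i0).
  by apply: subset_leq_card; apply: setSI; apply: sI.
have [c Hc] : exists c, c \in I :\: W'.
  apply/card_gt0P; move: (cardsID W' I) Hc2 H1 => <-; rewrite -[(#|_| < l)%N]/(#|_|.+1 <= l)%N.
  case: #|I :\: W'| => // /[swap]; rewrite addn0 => H1 H2.
  by move: (leq_trans H1 H2); rewrite ltnn.
move: Hc; rewrite inE => /andP[cW' cI].
exists c; split => //; apply: dlevel_ge => //.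
rewrite /gf leq_divRL //; apply: leq_trans Hc1 _; rewrite leq_mul2l; apply/orP; right.
apply: subset_leq_card; apply/subsetP => i Hi; rewrite inE.
rewrite (subsetP (sI i Hi) _ cI) /=; apply: leq_ltn_trans (cW i) (Hlt i Hi).
Qed.

Import Order.TTheory GRing.Theory Num.Theory.
Local Open Scope ring_scope.

Lemma main_aux (W : {set C}) : (0 < k)%N -> sejr_output A k W -> EJR A k W.
Proof.
move=> k0 [s [Hu [Hsz [HG [Hend [Hsub HW]]]]]]; split => // l /andP[l1 lk] Ns Hcoh.
case: (boolP [exists i in Ns, l <= #|A i :&: W|]%N) => [/existsP[i /andP[Hi Hl]]|Hn].
  by exists i.
have Hlt : forall i, i \in Ns -> (#|A i :&: W| < l)%N.
  move=> i Hi; rewrite ltnNge; apply/negP => Hl; move/negP: Hn; apply.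
  by apply/existsP; exists i; rewrite Hi Hl.
exfalso.
have Hl1 : (1 <= l <= k)%N by rewrite l1 lk.
case: Hend => [Hk | H0]; last first.
  have [c [cn cl]] := cohesive_level _ _ _ _ Hl1 Hcoh Hlt Hsub.
  by move: (leq_trans l1 cl); rewrite H0.
have /hasP[x0 _ _] : has predT s by rewrite has_predT Hk.
have [i0 Hi0] : exists i0, i0 \in Ns.
  case: Hcoh => Hc1 _.
  apply/card_gt0P; rewrite lt0n; apply/eqP => E; move: Hc1; rewrite E muln0 leqn0 muln_eq0.
  by case/orP => /eqP E0; [rewrite E0 in l1 | move: n_gt0; rewrite E0].
have Hlev : forall t, (t < size s)%N -> (l <= lev s x0 t)%N.
  move=> t ts.
  have [c [cn cl]] := cohesive_level _ _ _ (WT s t) Hl1 Hcoh Hlt (subset_trans (WT_sub s t) Hsub).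
  have [_ _ m] := greedy s x0 HG t ts; exact: leq_trans cl (m c cn).
have L : (n%:R : rat) <= \sum_(t < size s) \sum_(i < n) term s x0 i t.
  apply: le_trans (_ : \sum_(t < size s) (n%:R / k%:R) <= _).
    by rewrite sumr_const card_ord Hk -[_ *+ k]mulr_natr divfK // pnatr_eq0 -lt0n.
  apply: ler_sum => t _; exact: (sum_term s x0 HG).
rewrite exchange_big /= in L.
have w0 : w s x0 i0 (size s) < 1.
  have H := w_le_cnt s x0 HG l i0 (size s) l1 (leqnn _) (fun t ts => Hlev t ts).
  have l0 : 0 < l%:R :> rat by rewrite ltr0n.
  rewrite -(ltr_pM2l l0) mulr1; apply: le_lt_trans H _; rewrite ltr_nat.
  apply: leq_ltn_trans (Hlt _ Hi0); apply: subset_leq_card; apply: setIS.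
  exact: subset_trans (WT_sub s _) Hsub.
have U : \sum_(i < n) w s x0 i (size s) < n%:R.
  rewrite -[n in n%:R]card_ord -sumr_const (bigD1 i0) // [X in _ < X](bigD1 i0) //=.
  apply: ltr_leD => //; apply: ler_sum => i _; exact: (w_le1 s x0 HG).
by move: (le_lt_trans L U); rewrite ltxx.
Qed.

End Aux.

Theorem mainTheorem10 (n : nat) (C : finType) (A : 'I_n -> {set C}) (k : nat)
  (W : {set C}) :
  0 < n -> 0 < k -> k <= #|C| ->
  sejr_output A k W -> EJR A k W.
Proof.
move=> n0 k0 _; exact: main_aux.
Qed.
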